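(* Let $G$ be a group, $a,b\in G$, and let $<$ be a bi-ordering of $G$ with $a>1$. Then $a^{b^2}(a^b)^{-1}a>1$ and $(a^{b^2})^{-1}a^ba^{-1}<1$.
   Context: Notation: $x^y=y^{-1}xy$. A bi-ordering is a strict total order on $G$ invariant under both left and right multiplication. *)

(* Defs.v *)
Record Group : Type := {
  carrier :> Type;
  gmul : carrier -> carrier -> carrier;
  gone : carrier;
  ginv : carrier -> carrier;
  gmulA : forall x y z, gmul x (gmul y z) = gmul (gmul x y) z;
  gmul1 : forall x, gmul gone x = x;
  gmulV : forall x, gmul (ginv x) x = gone
}.

Arguments gmul {g} _ _.
Arguments gone {g}.
Arguments ginv {g} _.

(* conjugation: x^y = y^{-1} x y *)
Definition gconj {G : Group} (x y : G) : G := gmul (gmul (ginv y) x) y.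

Definition bi_ordering (G : Group) (lt : G -> G -> Prop) : Prop :=
  (forall x, ~ lt x x) /\
  (forall x y z, lt x y -> lt y z -> lt x z) /\
  (forall x y, x <> y -> lt x y \/ lt y x) /\
  (forall x y z, lt x y -> lt (gmul z x) (gmul z y)) /\
  (forall x y z, lt x y -> lt (gmul x z) (gmul y z)).

(* Main.v *)
Require Import Defs.
From Stdlib Require Import Setoid Classical.

Section S.
Variable G : Group.

Lemma mulV' (x : G) : gmul x (ginv x) = gone.
Proof.
  rewrite <- (gmul1 G (gmul x (ginv x))).
  rewrite <- (gmulV G (ginv x)) at 1.
  rewrite <- gmulA. rewrite (gmulA G (ginv x) x (ginv x)). rewrite gmulV, gmul1.
  apply gmulV.
Qed.

Lemma mul1r (x : G) : gmul x gone = x.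
Proof. rewrite <- (gmulV G x), gmulA, mulV', gmul1. reflexivity. Qed.

Variable lt : G -> G -> Prop.
Hypothesis H : bi_ordering G lt.

Lemma trans x y z : lt x y -> lt y z -> lt x z.
Proof. destruct H as [_ [h _]]; eauto. Qed.
Lemma lmul x y z : lt x y -> lt (gmul z x) (gmul z y).
Proof. destruct H as [_ [_ [_ [h _]]]]; eauto. Qed.
Lemma rmul x y z : lt x y -> lt (gmul x z) (gmul y z).
Proof. destruct H as [_ [_ [_ [_ h]]]]; eauto. Qed.
Lemma tot x y : x = y \/ lt x y \/ lt y x.
Proof. destruct H as [_ [_ [h _]]]. destruct (classic (x = y)) as [e|n]; auto.
Qed.

Lemma conjlt (x y b : G) : lt x y -> lt (gconj x b) (gconj y b).
Proof. intro h. unfold gconj. apply rmul, lmul, h. Qed.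

Lemma conj1 (b : G) : gconj gone b = gone.
Proof. unfold gconj. rewrite mul1r, gmulV. reflexivity. Qed.

Lemma pos_mul x y : lt gone x -> lt gone y -> lt gone (gmul x y).
Proof. intros hx hy. apply trans with y; auto.
  rewrite <- (gmul1 G y) at 1. apply rmul, hx. Qed.

Lemma neg_mul x y : lt x gone -> lt y gone -> lt (gmul x y) gone.
Proof. intros hx hy. apply trans with y; auto.
  rewrite <- (gmul1 G y) at 2. apply rmul, hx. Qed.

Lemma inv_neg x : lt gone x -> lt (ginv x) gone.
Proof. intro h. apply (lmul _ _ (ginv x)) in h. rewrite mul1r, gmulV in h. exact h. Qed.

Lemma conj_conj (a b : G) : gconj a (gmul b b) = gconj (gconj a b) b.
Proof. unfold gconj.
  assert (E : ginv (gmul b b) = gmul (ginv b) (ginv b)).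
  { assert (K : forall x y : G, gmul x y = gone -> ginv x = y).
    { intros x y e. rewrite <- (mul1r (ginv x)), <- e, gmulA, gmulV, gmul1. reflexivity. }
    apply K. rewrite <- !gmulA, (gmulA G b (ginv b)), mulV', gmul1, mulV'. reflexivity. }
  rewrite E. rewrite !gmulA. reflexivity.
Qed.
End S.

Theorem mainTheorem3 (G : Group) (lt : G -> G -> Prop) (a b : G)
  (Hlt : bi_ordering G lt) (Ha : lt gone a) :
  lt gone (gmul (gmul (gconj a (gmul b b)) (ginv (gconj a b))) a) /\
  lt (gmul (gmul (ginv (gconj a (gmul b b))) (gconj a b)) (ginv a)) gone.
Proof.
  rewrite conj_conj. set (c := gconj a b).
  assert (Hc : lt gone c) by (unfold c; rewrite <- (conj1 G b); apply conjlt; auto).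
  assert (Hd : lt gone (gconj c b)) by (rewrite <- (conj1 G b); apply conjlt; auto).
  destruct (tot G lt Hlt a c) as [E | [L | L]].
  - rewrite <- E. rewrite <- E in Hd. split.
    + rewrite <- gmulA, gmulV, mul1r. exact Hd.
    + rewrite <- gmulA, mulV', mul1r. apply (inv_neg G lt Hlt); auto.
  - assert (L2 : lt c (gconj c b)) by (unfold c; apply conjlt; auto).
    split.
    + apply (pos_mul G lt Hlt); auto.
      apply (rmul G lt Hlt _ _ (ginv c)) in L2. rewrite mulV' in L2. exact L2.
    + apply (neg_mul G lt Hlt); auto. 2: apply (inv_neg G lt Hlt); auto.
      apply (lmul G lt Hlt _ _ (ginv (gconj c b))) in L2. rewrite gmulV in L2. exact L2.
  - assert (L2 : lt (gconj c b) c) by (unfold c; apply conjlt; auto).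
    split.
    + rewrite <- gmulA. apply (pos_mul G lt Hlt); auto.
      apply (lmul G lt Hlt _ _ (ginv c)) in L. rewrite gmulV in L. exact L.
    + rewrite <- gmulA. apply (neg_mul G lt Hlt); [apply (inv_neg G lt Hlt); auto|].
      apply (rmul G lt Hlt _ _ (ginv a)) in L. rewrite mulV' in L. exact L.
Qed.
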